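(* Let $M$ be a finite set of alternatives, $\mathcal{R}$ the set of weak preference orders on $M$, and $\varphi:\mathcal{R}\to\Delta(M)$ a mechanism. If $\varphi$ is strategyproof, then it is separation upper invariant and separation lower invariant.
   Context: A preference order is a complete, transitive relation $R$ on $M$; $a\,I\,b$ means $a\,R\,b$ and $b\,R\,a$; $a\,P\,b$ means $a\,R\,b$ and not $b\,R\,a$. Write $R$ as $M_1\,P\,\cdots\,P\,M_K$ where $(M_k)$ are the nonempty indifference classes ordered so that $a\,P\,b$ for $a\in M_k$, $b\in M_{k'}$, $k<k'$. For $A\subseteq M$, $\varphi_A(R)=\sum_{a\in A}(\varphi(R))_a$. A lottery $x$ first order-stochastically dominates $y$ at $R$ if $\sum_{j: j R a}x_j\ge\sum_{j: j R a}y_j$ for all $a\in M$. $\varphi$ is strategyproof if $\varphi(R)$ first order-stochastically dominates $\varphi(R')$ at $R$ for all $R,R'\in\mathcal{R}$. A separation is a pair $(R,R')$ such that, with $R=M_1\,P\,\cdots\,P\,M_K$, there are $\kappa\in\{1,\dots,K\}$ and a partition of $M_\kappa$ into disjoint nonempty $M_\kappa^1,M_\kappa^2$ with $R'=M_1\,P'\,\cdots\,P'\,M_{\kappa-1}\,P'\,M_\kappa^1\,P'\,M_\kappa^2\,P'\,M_{\kappa+1}\,P'\,\cdots\,P'\,M_K$ (indifference within each listed set). $\varphi$ is separation upper invariant if for every separation $(R,R')$, $\varphi_{M_k}(R)=\varphi_{M_k}(R')$ for all $k\in\{1,\dots,\kappa-1\}$; separation lower invariant if for every separation, $\varphi_{M_k}(R)=\varphi_{M_k}(R')$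 for all $k\in\{\kappa+1,\dots,K\}$. *)

(* Defs.v *)
From mathcomp Require Import all_boot all_order all_algebra.
Set Implicit Arguments. Unset Strict Implicit. Unset Printing Implicit Defensive.
Import Order.TTheory GRing.Theory Num.Theory.
Local Open Scope ring_scope.

Section Defs.
Variable M : finType.
Variable R : realFieldType.

(* A (candidate) preference relation on M: R a b means "a is weakly preferred to b". *)
Definition prefT := {ffun M -> {ffun M -> bool}}.

Definition weak_order (P : prefT) : Prop :=
  (forall a b, P a b || P b a) /\ (forall a b c, P a b -> P b c -> P a c).

Definition lottery (x : {ffun M -> R}) : Prop :=
  (forall a, 0 <= x a) /\ \sum_(a : M) x a = 1.

Definition strict (P : prefT) a b := P a b && ~~ P b a.

Definition indiff (P : prefT) (a : M) : {set M} := [set b | P a b && P b a].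

Definition probA (phi : prefT -> {ffun M -> R}) (A : {set M}) (P : prefT) : R :=
  \sum_(a in A) phi P a.

Definition fosd (P : prefT) (x y : {ffun M -> R}) : Prop :=
  forall a, \sum_(j | P j a) y j <= \sum_(j | P j a) x j.

Definition strategyproof (phi : prefT -> {ffun M -> R}) : Prop :=
  forall P P', weak_order P -> weak_order P' -> fosd P (phi P) (phi P').

(* (P, P') is a separation splitting the indifference class C of P into C1 P' C2. *)
Definition separation (P P' : prefT) (C C1 C2 : {set M}) : Prop :=
  weak_order P /\ (exists a, C = indiff P a) /\
  C1 :&: C2 = set0 /\ C1 :|: C2 = C /\ C1 != set0 /\ C2 != set0 /\
  (forall a b, P' a b =
        if (a \in C) && (b \in C) then (a \in C1) || (b \in C2) else P a b).

Definition sep_upper_invariant (phi : prefT -> {ffun M -> R}) : Prop :=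
  forall P P' C C1 C2, separation P P' C C1 C2 ->
    forall a c, c \in C -> strict P a c ->
      probA phi (indiff P a) P = probA phi (indiff P a) P'.

Definition sep_lower_invariant (phi : prefT -> {ffun M -> R}) : Prop :=
  forall P P' C C1 C2, separation P P' C C1 C2 ->
    forall a c, c \in C -> strict P c a ->
      probA phi (indiff P a) P = probA phi (indiff P a) P'.

End Defs.

(* Main.v *)
Require Import Defs.
From mathcomp Require Import all_boot all_order all_algebra.
Import Order.TTheory GRing.Theory Num.Theory.
Local Open Scope ring_scope.

Section Aux.
Variables (M : finType) (R : realFieldType).

Lemma sep_main (phi : prefT M -> {ffun M -> R}) P P' C C1 C2 :
  strategyproof phi -> separation P P' C C1 C2 ->
  forall a, a \notin C -> probA phi (indiff P a) P = probA phi (indiff P a) P'.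
Proof.
move=> sp hs.
have wP' : weak_order P'.
  case: hs => [[tot tr] [[a0 ->] [I0 [U0 [_ [_ HP']]]]]].
  have inC x : (x \in indiff P a0) = P a0 x && P x a0 by rewrite inE.
  have CC x y : x \in indiff P a0 -> y \in indiff P a0 -> P x y.
    rewrite !inC => /andP[_ h1] /andP[h2 _]; exact: tr h1 h2.
  have part x : x \in indiff P a0 -> (x \in C1) || (x \in C2).
    by rewrite -U0 inE.
  have disj x : x \in C1 -> x \in C2 -> False.
    move=> h1 h2; have: x \in C1 :&: C2 by rewrite inE h1 h2.
    by rewrite I0 inE.
  have gap x y z : x \in indiff P a0 -> y \notin indiff P a0 ->
      z \in indiff P a0 -> P x y -> P y z -> False.
    rewrite !inC => /andP[h1 _] /negP hy /andP[_ h2] hxy hyz.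
    by apply: hy; rewrite (tr _ _ _ h1 hxy) (tr _ _ _ hyz h2).
  split.
  - move=> a b; rewrite !HP'.
    case Ha: (a \in indiff P a0); case Hb: (b \in indiff P a0) => //=; try exact: tot.
    by case/orP: (part a Ha) => ->; rewrite ?orbT.
  - move=> a b c; rewrite !HP'.
    case Ha: (a \in indiff P a0); case Hb: (b \in indiff P a0);
      case Hc: (c \in indiff P a0) => //=; try exact: tr.
    + move=> /orP[->//|h2] /orP[h1|->]; last by rewrite orbT.
      by case: (disj _ h1 h2).
    + move=> _; exact: tr (CC _ _ Ha Hb).
    + move=> h1 h2; case: (gap _ _ _ Ha (negbT Hb) Hc h1 h2).
    + move=> h1 _; exact: tr h1 (CC _ _ Hb Hc).
have wP : weak_order P by case: hs.
case: hs => [[tot tr] [[a0 Ceq] [I0 [U0 [_ [C2n HP']]]]]].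
have CC x y : x \in C -> y \in C -> P x y.
  rewrite Ceq !inE => /andP[_ h1] /andP[h2 _]; exact: tr h1 h2.
have sub2 x : x \in C2 -> x \in C by move=> h; rewrite -U0 inE h orbT.
pose good b := (b \notin C) || (b \in C2).
have goodE b : good b -> forall j, P' j b = P j b.
  move=> gb j; rewrite HP'; case: ifP => // /andP[jC bC].
  move: gb; rewrite /good bC /= => ->; rewrite orbT; symmetry; exact: CC.
have inv b : good b ->
    \sum_(j | P j b) phi P j = \sum_(j | P j b) phi P' j.
  move=> gb; apply/le_anti/andP; split.
  - have := sp P' P wP' wP b.
    by rewrite !(eq_bigl _ _ (goodE b gb)).
  - exact: sp P P' wP wP' b.
have decomp a (x : {ffun M -> R}) :
    \sum_(j in indiff P a) x j = \sum_(j | P j a) x j - \sum_(j | strict P j a) x j.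
  rewrite (bigID (fun j => P a j) (fun j => P j a)) /= addrK.
  by apply: eq_bigl => j; rewrite inE andbC.
move=> a aC; rewrite /probA !decomp (inv a); last by rewrite /good aC.
congr (_ - _).
case: (boolP [exists b, strict P b a]) => [/existsP [b0 hb0]|].
  have [b sb bmax] := @arg_maxnP _ b0 (fun b => strict P b a) (fun b => #|[set j | P j b]|) hb0.
  have SE j : strict P j a = P j b.
    apply/idP/idP.
    - move=> sj; apply/negPn/negP => njb.
      have pbj : P b j by case/orP: (tot j b) => // h; rewrite h in njb.
      have hm := bmax j sj.
      have: [set x | P x b] \proper [set x | P x j].
        apply/properP; split.
          by apply/subsetP => x; rewrite !inE => h; exact: tr h pbj.
        exists j; rewrite !inE //.
        by case/orP: (tot j j).
      by move/proper_card => lt; move: hm; rewrite /geq /= leqNgt lt.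
    - move=> pjb; move: sb; rewrite /strict => /andP [pba npab].
      rewrite (tr _ _ _ pjb pba) /=; apply/negP => paj.
      by rewrite (tr _ _ _ paj pjb) in npab.
  have [c2 [gc2 Hc2]] : exists c2, good c2 /\ forall j, P j b = P j c2.
    case bC: (b \in C); last first.
      by exists b; split => //; rewrite /good bC.
    case/set0Pn: C2n => c2 c2C2; exists c2; split; first by rewrite /good c2C2 orbT.
    move=> j; apply/idP/idP => h.
    + exact: tr h (CC _ _ bC (sub2 _ c2C2)).
    + exact: tr h (CC _ _ (sub2 _ c2C2) bC).
  rewrite !(eq_bigl _ _ (fun j => etrans (SE j) (Hc2 j))).
  exact: inv.
rewrite negb_exists => /forallP hn.
by rewrite !big_pred0 // => j; apply/negbTE.
Qed.

End Aux.

Theorem lemma1 (M : finType) (R : realFieldType)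
  (phi : prefT M -> {ffun M -> R})
  (hphi : forall P, weak_order P -> lottery (phi P)) :
  strategyproof phi -> sep_upper_invariant phi /\ sep_lower_invariant phi.
Proof.
move=> sp.
have key P P' C C1 C2 a c : separation P P' C C1 C2 -> c \in C ->
    (strict P a c || strict P c a) -> a \notin C.
  move=> hs cC hst; apply/negP => aC.
  case: hs => [[tot tr] [[a0 Ceq] _]].
  have CC x y : x \in C -> y \in C -> P x y.
    rewrite Ceq !inE => /andP[_ h1] /andP[h2 _]; exact: tr h1 h2.
  by move: hst; rewrite /strict (CC _ _ aC cC) (CC _ _ cC aC).
split=> P P' C C1 C2 hs a c cC st; apply: (@sep_main _ _ phi _ _ _ _ _ sp hs);
  apply: (key _ _ _ _ _ _ _ _ hs cC); rewrite st ?orbT //.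
Qed.
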